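(* Let $M=G/\Gamma$ be a 2-step nilmanifold with invariant abelian complex structure and $\mathfrak g^{1,0}=\mathfrak t^{1,0}\oplus\mathfrak c^{1,0}$, and assume $\dim_{\mathbb C}\mathfrak c^{1,0}=1$. Let $\Lambda=\Lambda_1+\Lambda_2$ be an invariant holomorphic Poisson bivector with $\Lambda_1\in\mathfrak t^{1,0}\otimes\mathfrak c^{1,0}$ and $\Lambda_2\in\wedge^2\mathfrak t^{1,0}$, and let $\bar\rho$ span $\mathfrak c^{*(0,1)}$. Then the spectral sequence of the Poisson bi-complex of $\Lambda$ degenerates on the first page if and only if (1) $\mathrm{ad}_{\Lambda_1}\bar\rho$ is $\bar\partial$-exact, and (2) $\Lambda_2$ lies in the center of the Schouten algebra $\oplus_{p,q}B^{p,q}$.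
   Context: $G$ is a simply connected nilpotent Lie group with Lie algebra $\mathfrak g$, $\Gamma$ a lattice, 2-step: $[\mathfrak g,\mathfrak g]\subseteq\mathfrak c$ (center). $J$ is a left-invariant abelian complex structure ($J^2=-1$, $[JA,JB]=[A,B]$), so $\mathfrak g^{1,0}$ is abelian. $\mathfrak g^{1,0}=\mathfrak t^{1,0}\oplus\mathfrak c^{1,0}$ with $\mathfrak c^{1,0}$ the $(1,0)$-part of the center, basis $W_\ell$, and $\mathfrak t^{1,0}$ with basis $T_k$, such that the only nonzero brackets are $[\bar T_k,T_j]=\sum_\ell E^\ell_{kj}W_\ell-\sum_\ell\bar E^\ell_{jk}\bar W_\ell$; dual basis $\omega^k,\rho^\ell$ with $d\omega^k=0$, $d\rho^\ell=\sum E^\ell_{ji}\omega^i\wedge\bar\omega^j$; $\mathfrak t^{*(0,1)}=\mathrm{span}\{\bar\omega^k\}$, $\mathfrak c^{*(0,1)}=\mathrm{span}\{\bar\rho^\ell\}$. $B^{p,q}=\wedge^p\mathfrak g^{1,0}\otimes\wedge^q\mathfrak g^{*(0,1)}$, viewed as invariant elements of $A^{p,q}=C^\infty(M,\wedge^pT^{1,0}M\otimes\wedge^qT^{*(0,1)}M)$, preserved by $\bar\partial$ (Dolbeault operator with values in $(p,0)$-vectors) and the Schouten bracket (graded extension of the Lie bracket of $(1,0)$-vector fields, $[V,\bar\omega]=\mathcal L_V\bar\omega$, $[\bar\omega_1,\bar\omega_2]=0$). A holomorphic Poisson structure is a holomorphic bivector $\Lambda$ with $[\Lambda,\Lambda]=0$;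 its Poisson bi-complex is $(A^{p,q},\mathrm{ad}_\Lambda,\bar\partial)$, $\mathrm{ad}_\Lambda=[\Lambda,\cdot]:A^{p,q}\to A^{p+1,q}$; the filtration by $p$ gives a spectral sequence with $E_1^{p,q}=H^q(M,\Theta^p)$ ($\Theta^p$ the sheaf of holomorphic $p$-vector fields) and $d_1$ induced by $\mathrm{ad}_\Lambda$. ''Degenerates on the first page'' means $d_1^{p,q}=0$ for all $p,q$. By a known result the inclusion $B^{p,q}\subset A^{p,q}$ induces isomorphisms $H^q(\mathfrak g^{p,0})\cong H^q(M,\Theta^p)$, where $H^q(\mathfrak g^{p,0})$ is the $\bar\partial$-cohomology of $B^{p,\bullet}$. *)

(* Defs.v *)
(* Algebraic (invariant) model of the Poisson bi-complex of a
   2-step nilmanifold with abelian complex structure and dim_C c^{1,0} = 1. *)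
From HB Require Import structures.
From mathcomp Require Import all_boot all_order all_algebra.
Set Implicit Arguments. Unset Strict Implicit. Unset Printing Implicit Defensive.
Import Order.TTheory GRing.Theory Num.Theory.
Local Open Scope ring_scope.

(* Exterior (super-commutative) algebra on odd generators indexed by a  *)
(* finite type I; an element is a function from sets of generators      *)
(* (monomials, ordered increasingly along enum_rank) to coefficients.   *)
Notation ext C I := {ffun {set I} -> C}.
Notation B C n := {ffun {set ('I_n.+1 * bool)%type} -> C}.

Section Exterior.
Variables (C : fieldType) (I : finType).

Definition mono (S : {set I}) : ext C I := [ffun T => (T == S)%:R].

(* sign of e_S /\ e_T -> e_(S u T) *)
Definition wsign (S T : {set I}) : C :=
  (-1) ^+ #|[set p : I * I | (p.1 \in S) && (p.2 \in T)
                              && (enum_rank p.2 < enum_rank p.1)%N]|.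

Definition wedge (P Q : ext C I) : ext C I :=
  [ffun U : {set I} => \sum_(S : {set I}) \sum_(T : {set I})
     (if [disjoint S & T] && (S :|: T == U) then P S * Q T * wsign S T else 0)].

(* left super-derivative with respect to the generator a:
   d_a e_S = (-1)^#{s in S | s < a} e_(S \ a) if a in S, 0 otherwise *)
Definition sderiv (a : I) (P : ext C I) : ext C I :=
  [ffun U : {set I} => if a \in U then 0
             else (-1) ^+ #|[set s in U | (enum_rank s < enum_rank a)%N]| * P (a |: U)].

Definition scal (c : C) (P : ext C I) : ext C I := [ffun U : {set I} => c * P U].

Definition gen (a : I) : ext C I := mono [set a].

(* Schouten bracket on the exterior algebra of a Lie algebra L with basis
   indexed by I and bracket of basis elements [x_a, x_b] = br a b :
   [x1..xk, y1..yl] = sum_(i,j) (-1)^(i+j) [xi,yj] /\ x1..^xi..xk /\ y1..^yj..yl *)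
Definition schouten (br : I -> I -> ext C I) (P Q : ext C I) : ext C I :=
  \sum_(a : I) \sum_(b : I) wedge (wedge (br a b) (sderiv a P)) (sderiv b Q).

(* the unique derivation (of total degree +1) extending D on generators
   (D takes values of even degree 2) *)
Definition derivation (D : I -> ext C I) (P : ext C I) : ext C I :=
  \sum_(a : I) wedge (D a) (sderiv a P).

End Exterior.
Arguments gen {C I} a.
Arguments mono {C I} S.

(* The concrete model: generators of L = g^{1,0} (+) g^{*(0,1)}.        *)
(* A generator (k, false) with k : 'I_n.+1 is the vector T_k (k < n) or *)
(* W (k = n); (k, true) is the form  bar omega^k (k < n) or bar rho.    *)
Definition gidx (n : nat) := ('I_n.+1 * bool)%type.

Section Model.
Variables (C : numClosedFieldType) (n : nat).
(* E k j = E^1_{kj}: [bar T_k, T_j] = E k j W - conj(E j k) bar W *)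
Variable E : 'M[C]_n.

Definition iT (k : 'I_n) : gidx n := (widen_ord (leqnSn n) k, false).
Definition iW : gidx n := (ord_max, false).
Definition iob (k : 'I_n) : gidx n := (widen_ord (leqnSn n) k, true).
Definition irb : gidx n := (ord_max, true).


Definition Bdeg (p q : nat) (P : B C n) : Prop :=
  forall S, P S != 0 ->
    #|[set a in S | ~~ a.2]| = p /\ #|[set a in S | a.2]| = q.

Definition LTrho (j : 'I_n) : B C n :=
  - \sum_(i < n) scal (E j i)^* (gen (iob i)).

Definition brL (a b : gidx n) : B C n :=
  \sum_(j < n) ((if (a == iT j) && (b == irb) then LTrho j else 0)
              - (if (a == irb) && (b == iT j) then LTrho j else 0)).

Definition sch (P Q : B C n) : B C n := schouten brL P Q.

Definition dbarGen (a : gidx n) : B C n :=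
  \sum_(j < n) (if a == iT j then
                  \sum_(k < n) scal (E k j) (wedge (gen (iob k)) (gen iW))
                else 0).

Definition dbar (P : B C n) : B C n := derivation dbarGen P.

Definition in_tc (P : B C n) : Prop :=
  forall S, P S != 0 -> exists k, S = [set iT k; iW].
Definition in_t2 (P : B C n) : Prop :=
  forall S, P S != 0 -> exists i j, i != j /\ S = [set iT i; iT j].

Definition dbar_exact_in (p q : nat) (P : B C n) : Prop :=
  exists Y, Bdeg p q Y /\ P = dbar Y.

(* d_1^{p,q} = 0 on E_1^{p,q} = H^q(g^{p,0}) (= H^q(M, Theta^p)):
   every dbar-closed x in B^{p,q} has ad_Lambda x dbar-exact in B^{p+1,.} *)
Definition E1_degenerate (L : B C n) : Prop :=
  forall (p q : nat) (x : B C n), Bdeg p q x -> dbar x = 0 ->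
    if q is q'.+1 then dbar_exact_in p.+1 q' (sch L x) else sch L x = 0.

(* c^{1,0} is the whole (1,0)-part of the center: no nonzero
   X = sum_k a_k T_k is central *)
Definition center_is_c : Prop :=
  forall a : 'I_n -> C,
    (forall j, \sum_(k < n) E j k * a k = 0) ->
    (forall j, \sum_(k < n) (E k j)^* * a k = 0) ->
    forall k, a k = 0.

End Model.

(* Main.v *)
Require Import Defs.
From HB Require Import structures.
From mathcomp Require Import all_boot all_order all_algebra.
From mathcomp Require Import zify.
Import Order.TTheory GRing.Theory Num.Theory.
Local Open Scope ring_scope.
Set Implicit Arguments. Unset Strict Implicit. Unset Printing Implicit Defensive.

Section Ext.
Variables (C : fieldType) (I : finType).
Implicit Types (P Q R : ext C I) (S T U V : {set I}) (a b : I) (c d : C).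

Lemma eE0 U : (0 : ext C I) U = 0. Proof. by rewrite ffunE. Qed.
Lemma eED P Q U : (P + Q) U = P U + Q U. Proof. by rewrite ffunE. Qed.
Lemma eEN P U : (- P) U = - P U. Proof. by rewrite ffunE. Qed.
Lemma eEZ c P U : scal c P U = c * P U. Proof. by rewrite ffunE. Qed.
Lemma eEm S U : (mono S : ext C I) U = (U == S)%:R. Proof. by rewrite ffunE. Qed.
Lemma eEsum (J : Type) (r : seq J) (p : pred J) (F : J -> ext C I) U :
  (\sum_(j <- r | p j) F j) U = \sum_(j <- r | p j) F j U.
Proof. by rewrite sum_ffunE. Qed.

Definition wc S T U : C :=
  if [disjoint S & T] && (S :|: T == U) then wsign C S T else 0.

Lemma wedgeE P Q U : wedge P Q U = \sum_S \sum_T P S * Q T * wc S T U.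
Proof.
rewrite ffunE; apply: eq_bigr => S _; apply: eq_bigr => T _.
by rewrite /wc; case: ifP; rewrite ?mulr0.
Qed.

Definition sc a U : C :=
  if a \in U then 0 else (-1) ^+ #|[set s in U | (enum_rank s < enum_rank a)%N]|.

Lemma sderivE a P U : sderiv a P U = sc a U * P (a |: U).
Proof. by rewrite ffunE /sc; case: ifP; rewrite ?mul0r. Qed.

Definition par P : ext C I := [ffun U : {set I} => (-1) ^+ #|U| * P U].

Definition lin (f : ext C I -> ext C I) :=
  forall (c : C) P Q, f (scal c P + Q) = scal c (f P) + f Q.

Lemma scal1 P : scal 1 P = P.
Proof. by apply/ffunP => U; rewrite eEZ mul1r. Qed.
Lemma scal0 P : scal 0 P = 0.
Proof. by apply/ffunP => U; rewrite eEZ eE0 mul0r. Qed.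
Lemma scalP0 c : scal c (0 : ext C I) = 0.
Proof. by apply/ffunP => U; rewrite eEZ eE0 mulr0. Qed.
Lemma scalA c d P : scal c (scal d P) = scal (c * d) P.
Proof. by apply/ffunP => U; rewrite !eEZ mulrA. Qed.
Lemma scalDr c P Q : scal c (P + Q) = scal c P + scal c Q.
Proof. by apply/ffunP => U; rewrite !(eEZ, eED) mulrDr. Qed.
Lemma scalDl c d P : scal (c + d) P = scal c P + scal d P.
Proof. by apply/ffunP => U; rewrite !(eEZ, eED) mulrDl. Qed.
Lemma scalN1 P : scal (-1) P = - P.
Proof. by apply/ffunP => U; rewrite !(eEZ, eEN) mulN1r. Qed.
Lemma scal_sum c (J : Type) (r : seq J) (p : pred J) (F : J -> ext C I) :
  scal c (\sum_(j <- r | p j) F j) = \sum_(j <- r | p j) scal c (F j).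
Proof. by apply/ffunP => U; rewrite !(eEZ, eEsum) mulr_sumr; apply: eq_bigr => j _; rewrite eEZ. Qed.

Section LinF.
Variable f : ext C I -> ext C I.
Hypothesis hf : lin f.
Lemma lin0 : f 0 = 0.
Proof. by have := hf (-1) 0 0; rewrite scalP0 addr0 scalN1 addNr. Qed.
Lemma linD P Q : f (P + Q) = f P + f Q.
Proof. by rewrite -{1}[P]scal1 hf scal1. Qed.
Lemma linZ c P : f (scal c P) = scal c (f P).
Proof. by rewrite -[scal c P]addr0 hf lin0 addr0. Qed.
Lemma linN P : f (- P) = - f P.
Proof. by rewrite -scalN1 linZ scalN1. Qed.
Lemma linB P Q : f (P - Q) = f P - f Q.
Proof. by rewrite linD linN. Qed.
Lemma lin_sum (J : Type) (r : seq J) (p : pred J) (F : J -> ext C I) :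
  f (\sum_(j <- r | p j) F j) = \sum_(j <- r | p j) f (F j).
Proof. exact: (big_morph f linD lin0). Qed.
End LinF.

Lemma ext_expand P : P = \sum_S scal (P S) (mono S : ext C I).
Proof.
apply/ffunP => U; rewrite eEsum (bigD1 U) //= big1 => [|S /negbTE nS].
  by rewrite eEZ eEm eqxx mulr1 addr0.
by rewrite eEZ eEm eq_sym nS mulr0.
Qed.

Lemma lin_ext f g : lin f -> lin g -> (forall S, f (mono S : ext C I) = g (mono S)) ->
  forall P, f P = g P.
Proof.
move=> hf hg e P; rewrite (ext_expand P) (lin_sum hf) (lin_sum hg).
by apply: eq_bigr => S _; rewrite (linZ hf) (linZ hg) e.
Qed.

Lemma lin_wedgel Q : lin (fun P => wedge P Q).
Proof.
move=> c P1 P2; apply/ffunP => U; rewrite !(eED, eEZ, wedgeE) mulr_sumr -big_split.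
apply: eq_bigr => S _; rewrite mulr_sumr -big_split; apply: eq_bigr => T _ /=.
by rewrite !(eED, eEZ) !mulrA !mulrDl.
Qed.

Lemma lin_wedger P : lin (fun Q => wedge P Q).
Proof.
move=> c Q1 Q2; apply/ffunP => U; rewrite !(eED, eEZ, wedgeE) mulr_sumr -big_split.
apply: eq_bigr => S _; rewrite mulr_sumr -big_split; apply: eq_bigr => T _ /=.
rewrite !(eED, eEZ) mulrDr mulrDl; congr (_ + _).
by rewrite !mulrA [c * P S]mulrC.
Qed.

Lemma lin_sderiv a : lin (sderiv a).
Proof.
move=> c P1 P2; apply/ffunP => U; rewrite !(eED, eEZ, sderivE) ?(eED, eEZ).
by rewrite mulrDr !mulrA [c * _]mulrC.
Qed.

Lemma lin_par : lin par.
Proof.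
move=> c P1 P2; apply/ffunP => U; rewrite !(eED, eEZ, ffunE) ?(eED, eEZ).
by rewrite mulrDr !mulrA [c * _]mulrC.
Qed.

Lemma lin_scal c : lin (scal c).
Proof. by move=> d P Q; rewrite scalDr !scalA mulrC. Qed.

Lemma lin_comp f g : lin f -> lin g -> lin (fun P => f (g P)).
Proof. by move=> hf hg c P Q; rewrite hg hf. Qed.

Lemma lin_add f g : lin f -> lin g -> lin (fun P => f P + g P).
Proof.
move=> hf hg c P Q; rewrite hf hg scalDr.
by rewrite -!addrA; congr (_ + _); rewrite addrCA.
Qed.

Lemma lin_id : lin id. Proof. by []. Qed.

Lemma lin_neg f : lin f -> lin (fun P => - f P).
Proof. by move=> hf c P Q; rewrite hf opprD -!scalN1 !scalA mulrC. Qed.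

Lemma lin_zero : lin (fun _ => 0).
Proof. by move=> c P Q; rewrite scalP0 addr0. Qed.


Lemma disj_eq (A B A' B' : {set I}) :
  (forall x, (x \in A) && (x \in B) = (x \in A') && (x \in B')) ->
  [disjoint A & B] = [disjoint A' & B'].
Proof. by move=> h; rewrite -!setI_eq0; congr (_ == _); apply/setP => x; rewrite !inE h. Qed.

Lemma disj_intro (A B : {set I}) : (forall x, x \in A -> x \in B -> False) -> [disjoint A & B].
Proof.
move=> h; rewrite -setI_eq0; apply/eqP/setP => x; rewrite !inE.
by apply/negP => /andP[]; exact: h.
Qed.

Lemma disj_elim (A B : {set I}) x : [disjoint A & B] -> x \in A -> x \in B -> False.
Proof. rewrite -setI_eq0 => /eqP/setP/(_ x); rewrite !inE => h xA xB; by rewrite xA xB in h. Qed.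

Definition inv S T := #|[set p : I * I | (p.1 \in S) && (p.2 \in T)
                              && (enum_rank p.2 < enum_rank p.1)%N]|.
Lemma wsignE S T : wsign C S T = (-1) ^+ inv S T. Proof. by []. Qed.

Lemma sgnP (m k : nat) : odd m = odd k -> (-1) ^+ m = (-1) ^+ k :> C.
Proof. by move=> h; rewrite -signr_odd h signr_odd. Qed.

Lemma invUl S1 S2 T : [disjoint S1 & S2] -> (inv (S1 :|: S2) T = inv S1 T + inv S2 T)%N.
Proof.
move=> dis; rewrite /inv.
set A1 := [set p : I * I | (p.1 \in S1) && _ && _].
set A2 := [set p : I * I | (p.1 \in S2) && _ && _].
have -> : [set p : I * I | (p.1 \in S1 :|: S2) && (p.2 \in T)
             && (enum_rank p.2 < enum_rank p.1)%N] = A1 :|: A2.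
  apply/setP => p; rewrite !inE.
  by case: (p.1 \in S1); case: (p.1 \in S2); case: (p.2 \in T); case: (_ < _)%N.
rewrite cardsU (_ : A1 :&: A2 = set0) ?cards0 ?subn0 //.
apply/setP => p; rewrite !inE.
case h1: (p.1 \in S1); case h2: (p.1 \in S2) => //=; first by case: (disj_elim dis h1 h2).
by rewrite andbF.
Qed.

Lemma invUr S T1 T2 : [disjoint T1 & T2] -> (inv S (T1 :|: T2) = inv S T1 + inv S T2)%N.
Proof.
move=> dis; rewrite /inv.
set A1 := [set p : I * I | _ && (p.2 \in T1) && _].
set A2 := [set p : I * I | _ && (p.2 \in T2) && _].
have -> : [set p : I * I | (p.1 \in S) && (p.2 \in T1 :|: T2)
             && (enum_rank p.2 < enum_rank p.1)%N] = A1 :|: A2.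
  apply/setP => p; rewrite !inE.
  by case: (p.1 \in S); case: (p.2 \in T1); case: (p.2 \in T2); case: (_ < _)%N.
rewrite cardsU (_ : A1 :&: A2 = set0) ?cards0 ?subn0 //.
apply/setP => p; rewrite !inE.
case h1: (p.2 \in T1); case h2: (p.2 \in T2) => //=; rewrite ?andbF //.
by case: (disj_elim dis h1 h2).
Qed.

Lemma invC S T : [disjoint S & T] -> (inv S T + inv T S = #|S| * #|T|)%N.
Proof.
move=> dis.
set sw := fun p : I * I => (p.2, p.1).
have swi : injective sw by case=> x y [] u v /= [] -> ->.
have -> : inv T S = #|[set p : I * I | (p.1 \in S) && (p.2 \in T)
                        && (enum_rank p.1 < enum_rank p.2)%N]|.
  rewrite /inv -(card_preimset _ swi); apply: eq_card => -[x y].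
  by rewrite !inE /= [(y \in T) && _]andbC.
rewrite /inv -cardsX.
set A1 := [set p : I * I | _ && _ && (enum_rank p.2 < enum_rank p.1)%N].
set A2 := [set p : I * I | _ && _ && (enum_rank p.1 < enum_rank p.2)%N].
have -> : setX S T = A1 :|: A2.
  apply/setP => [[x y]]; rewrite !inE /=.
  case xS: (x \in S); case yT: (y \in T) => //=.
  have hne : (enum_rank x : nat) != enum_rank y.
    apply/eqP => /val_inj/enum_rank_inj exy.
    by case: (disj_elim dis xS); rewrite exy.
  by rewrite -neq_ltn eq_sym.
rewrite cardsU (_ : A1 :&: A2 = set0) ?cards0 ?subn0 //.
apply/setP => [[x y]]; rewrite !inE /=.
case: (x \in S); case: (y \in T) => //=.
by apply/negP => /andP[h1 h2]; move: (ltn_trans h1 h2); rewrite ltnn.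
Qed.

Lemma inv1l a X : inv [set a] X = #|[set t in X | (enum_rank t < enum_rank a)%N]|.
Proof.
rewrite /inv -[RHS](card_imset _ (fun u v (e : (a, u) = (a, v)) => congr1 snd e)).
apply: eq_card => -[x y]; rewrite !inE /=.
apply/idP/imsetP => [/andP[/andP[/eqP -> yX] lt] | [t]].
  by exists y => //; rewrite inE yX lt.
by rewrite inE => /andP[tX lt] [-> ->]; rewrite eqxx tX lt.
Qed.

Lemma inv0r S : inv S set0 = 0%N.
Proof. by rewrite /inv; apply/eqP; rewrite cards_eq0; apply/eqP/setP => p; rewrite !inE andbF. Qed.
Lemma inv0l T : inv set0 T = 0%N.
Proof. by rewrite /inv; apply/eqP; rewrite cards_eq0; apply/eqP/setP => p; rewrite !inE. Qed.


Notation m S := (mono S : ext C I).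

Lemma wedge_mono S T : wedge (m S) (m T) =
  if [disjoint S & T] then scal (wsign C S T) (m (S :|: T)) else 0.
Proof.
apply/ffunP => U; rewrite wedgeE (bigD1 S) //= [X in _ + X]big1 => [|S' nS]; last first.
  by apply: big1 => T' _; rewrite eEm (negbTE nS) !mul0r.
rewrite addr0 (bigD1 T) //= [X in _ + X]big1 => [|T' nT]; last by rewrite !eEm eqxx (negbTE nT) mulr0 mul0r.
rewrite !eEm !eqxx !mul1r !addr0 /wc.
case: [disjoint S & T] => /=; last by rewrite eE0.
by rewrite eEZ eEm eq_sym; case: (_ == _); rewrite ?mulr1 ?mulr0.
Qed.

Lemma sderiv_mono a S : sderiv a (m S) =
  if a \in S then scal (wsign C [set a] (S :\ a)) (m (S :\ a)) else 0.
Proof.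
apply/ffunP => U; rewrite sderivE eEm /sc.
case: ifP => aU.
  rewrite mul0r; case: ifP => aS; last by rewrite eE0.
  rewrite eEZ eEm; case: eqP => [eU|]; last by rewrite mulr0.
  by move: aU; rewrite eU !inE eqxx.
case: ifP => aS; last first.
  case: eqP => [eU|]; last by rewrite mulr0 eE0.
  by move: aS; rewrite -eU !inE eqxx.
rewrite eEZ eEm; case: eqP => [eU|neU].
  have -> : U = S :\ a by rewrite -eU setU1K ?aU.
  by rewrite eqxx !mulr1 wsignE inv1l.
case: eqP => [eU2|]; last by rewrite !mulr0.
by case: neU; rewrite eU2 setD1K.
Qed.

Lemma par_mono S : par (m S) = scal ((-1) ^+ #|S|) (m S).
Proof.
by apply/ffunP => U; rewrite ffunE eEZ eEm; case: eqP => [->|]; rewrite ?mulr0.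
Qed.

Lemma gen_mono a : (gen a : ext C I) = m [set a]. Proof. by []. Qed.

Lemma wedge1r P : wedge P (m set0) = P.
Proof.
apply: (lin_ext (lin_wedgel _) lin_id) => S /=.
rewrite wedge_mono (_ : [disjoint S & set0]); last by apply: disj_intro => x _; rewrite inE.
by rewrite setU0 wsignE inv0r expr0 scal1.
Qed.

Lemma wedge1l P : wedge (m set0) P = P.
Proof.
apply: (lin_ext (lin_wedger _) lin_id) => S /=.
rewrite wedge_mono (_ : [disjoint set0 & S]); last by apply: disj_intro => x; rewrite inE.
by rewrite set0U wsignE inv0l expr0 scal1.
Qed.

Lemma wedge0l P : wedge 0 P = 0. Proof. exact: (lin0 (lin_wedgel _)). Qed.
Lemma wedge0r P : wedge P 0 = 0. Proof. exact: (lin0 (lin_wedger _)). Qed.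
Lemma wedgeZl c P Q : wedge (scal c P) Q = scal c (wedge P Q).
Proof. exact: (linZ (lin_wedgel _)). Qed.
Lemma wedgeZr c P Q : wedge P (scal c Q) = scal c (wedge P Q).
Proof. exact: (linZ (lin_wedger _)). Qed.
Lemma sderiv0 a : sderiv a (0 : ext C I) = 0. Proof. exact: (lin0 (lin_sderiv _)). Qed.
Lemma sderivZ a c P : sderiv a (scal c P) = scal c (sderiv a P).
Proof. exact: (linZ (lin_sderiv _)). Qed.

Lemma disjUl S1 S2 T : [disjoint S1 :|: S2 & T] = [disjoint S1 & T] && [disjoint S2 & T].
Proof. by rewrite -!setI_eq0 setIUl setU_eq0. Qed.
Lemma disjUr S T1 T2 : [disjoint S & T1 :|: T2] = [disjoint S & T1] && [disjoint S & T2].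
Proof. by rewrite -!setI_eq0 setIUr setU_eq0. Qed.

Lemma wedgeA_mono S T U :
  wedge (wedge (m S) (m T)) (m U) = wedge (m S) (wedge (m T) (m U)).
Proof.
rewrite !wedge_mono.
case dST: [disjoint S & T]; case dTU: [disjoint T & U];
  rewrite ?wedge0l ?wedge0r ?wedgeZl ?wedgeZr ?wedge_mono ?disjUl ?disjUr ?dST ?dTU //=.
- rewrite andbT; case dSU: [disjoint S & U] => /=; last by rewrite !scalP0.
  rewrite !scalA setUA; congr scal; rewrite !wsignE -!exprD; congr (_ ^+ _).
  rewrite invUl // invUr //; lia.
- by rewrite andbF scalP0.
- by rewrite scalP0.
Qed.

Lemma wedgeA P Q R : wedge (wedge P Q) R = wedge P (wedge Q R).
Proof.
move: P; apply: (lin_ext (lin_comp (lin_wedgel _) (lin_wedgel _)) (lin_wedgel _)) => S /=.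
move: Q; apply: (lin_ext (lin_comp (lin_wedgel _) (lin_wedger _))
                          (lin_comp (lin_wedger _) (lin_wedgel _))) => T /=.
move: R; apply: (lin_ext (lin_wedger _) (lin_comp (lin_wedger _) (lin_wedger _))) => U /=.
exact: wedgeA_mono.
Qed.


Lemma disj1D a S : [disjoint [set a] & S :\ a].
Proof. by apply: disj_intro => x; rewrite !inE => /eqP ->; rewrite eqxx. Qed.
Lemma disjD1 a S : [disjoint S :\ a & [set a]].
Proof. by apply: disj_intro => x; rewrite !inE => /andP[/negbTE h _] /eqP e; rewrite e eqxx in h. Qed.

Lemma invD1l a S T : a \in S -> inv S T = (inv [set a] T + inv (S :\ a) T)%N.
Proof. by move=> aS; rewrite -invUl ?disj1D // setD1K. Qed.
Lemma invD1r a S T : a \in T -> inv S T = (inv S [set a] + inv S (T :\ a))%N.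
Proof. by move=> aT; rewrite -invUr ?disj1D // setD1K. Qed.
Lemma cardD1' a S : a \in S -> #|S| = #|S :\ a|.+1.
Proof. by move=> aS; rewrite (cardsD1 a S) aS. Qed.

Lemma sgn_cancel (A B : nat) : odd B = ~~ odd A -> (-1) ^+ A + (-1) ^+ B = 0 :> C.
Proof.
move=> h; rewrite -signr_odd -[X in _ + X]signr_odd h.
by case: (odd A); rewrite /= ?expr1 ?expr0 ?addrN ?addNr.
Qed.

Lemma sgn_mul (A B : nat) : (-1) ^+ A * (-1) ^+ B = (-1) ^+ (A + B) :> C.
Proof. by rewrite exprD. Qed.

Lemma leib_mono a S T : sderiv a (wedge (m S) (m T)) =
  wedge (sderiv a (m S)) (m T) + wedge (par (m S)) (sderiv a (m T)).
Proof.
rewrite par_mono wedgeZl !sderiv_mono wedge_mono.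
case aS: (a \in S); case aT: (a \in T).
- have -> : [disjoint S & T] = false.
    by apply/negbTE/negP => d; apply: (disj_elim d aS aT).
  rewrite sderiv0 wedgeZl wedgeZr !wedge_mono.
  have -> : [disjoint S :\ a & T] = [disjoint S & T :\ a].
    apply: disj_eq => x; rewrite !inE; case: (x =P a) => [->|]; by rewrite ?aS ?aT.
  case: ifP => d; last by rewrite !scalP0 addr0.
  have -> : S :\ a :|: T = S :|: T :\ a.
    apply/setP => x; rewrite !inE; case: (x =P a) => [->|]; by rewrite ?aS ?aT ?orbT.
  rewrite !scalA -scalDl !wsignE !sgn_mul sgn_cancel ?scal0 //.
  have h1 := invD1l (T :\ a) aS.
  have h2 := invD1r (S :\ a) aT.
  have h3 := invC (disj1D a S).
  have h4 := cardD1' aS.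
  rewrite cards1 in h3; lia.
- have d' : [disjoint S :\ a & T] = [disjoint S & T].
    apply: disj_eq => x; rewrite !inE; case: (x =P a) => [->|]; by rewrite ?aS ?aT ?andbF.
  rewrite wedge0r scalP0 addr0 wedgeZl wedge_mono d'.
  case dST: [disjoint S & T]; last by rewrite sderiv0 scalP0.
  rewrite sderivZ sderiv_mono inE aS /= !scalA.
  have -> : (S :|: T) :\ a = S :\ a :|: T.
    apply/setP => x; rewrite !inE; case: (x =P a) => [->|]; by rewrite ?aS ?aT.
  congr scal; rewrite !wsignE !sgn_mul; apply: sgnP.
  have h1 := invD1l T aS.
  have h2 := invUr [set a] (_ : [disjoint S :\ a & T]); rewrite d' in h2.
  rewrite h2 //; lia.
- have d' : [disjoint S & T :\ a] = [disjoint S & T].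
    apply: disj_eq => x; rewrite !inE; case: (x =P a) => [->|]; by rewrite ?aS ?aT ?andbF.
  rewrite wedge0l add0r wedgeZr wedge_mono d'.
  case dST: [disjoint S & T]; last by rewrite sderiv0 !scalP0.
  rewrite sderivZ sderiv_mono inE aT orbT !scalA.
  have -> : (S :|: T) :\ a = S :|: T :\ a.
    apply/setP => x; rewrite !inE; case: (x =P a) => [->|]; by rewrite ?aS ?aT.
  congr scal; rewrite !wsignE !sgn_mul; apply: sgnP.
  have h1 := invD1r S aT.
  have h2 := invUr [set a] (_ : [disjoint S & T :\ a]); rewrite d' in h2.
  have h3 : [disjoint [set a] & S] by apply: disj_intro => x; rewrite inE => /eqP ->; rewrite aS.
  have h4 := invC h3; rewrite cards1 in h4.
  rewrite h2 //; lia.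
- rewrite wedge0l wedge0r scalP0 addr0.
  case: [disjoint S & T]; rewrite ?sderivZ ?sderiv_mono ?inE ?aS ?aT ?scalP0 ?sderiv0 //.
Qed.

Lemma leib a P Q : sderiv a (wedge P Q) = wedge (sderiv a P) Q + wedge (par P) (sderiv a Q).
Proof.
move: P; apply: (lin_ext (lin_comp (lin_sderiv _) (lin_wedgel _))
   (lin_add (lin_comp (lin_wedgel _) (lin_sderiv _)) (lin_comp (lin_wedgel _) lin_par))) => S /=.
move: Q; apply: (lin_ext (lin_comp (lin_sderiv _) (lin_wedger _))
   (lin_add (lin_wedger _) (lin_comp (lin_wedger _) (lin_sderiv _)))) => T /=.
exact: leib_mono.
Qed.


Lemma sderivC_mono a b S : sderiv a (sderiv b (m S)) = - sderiv b (sderiv a (m S)).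
Proof.
rewrite (sderiv_mono b S) (sderiv_mono a S).
case bS: (b \in S); case aS: (a \in S);
  rewrite ?sderivZ ?sderiv0 ?oppr0 ?sderiv_mono ?inE ?aS ?bS ?andbF ?scalP0 ?oppr0 //=.
case: (a =P b) => [<-|/eqP nab]; first by rewrite eqxx /= !scalP0 oppr0.
rewrite /= (eq_sym b a) nab /= !scalA -scalN1 scalA.
have -> : S :\ b :\ a = S :\ a :\ b.
  by apply/setP => x; rewrite !inE; case: (x == a); case: (x == b).
congr scal; rewrite !wsignE -[-1 : C]expr1 !sgn_mul; apply: sgnP.
have bSa : b \in S :\ a by rewrite !inE eq_sym nab.
have aSb : a \in S :\ b by rewrite !inE nab.
have h1 := invD1r [set a] bSa.
have h2 := invD1r [set b] aSb.
have h3 : [disjoint [set a] & [set b]].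
  by apply: disj_intro => x; rewrite !inE => /eqP -> /eqP e; rewrite e eqxx in nab.
have h4 := invC h3; rewrite !cards1 in h4.
have e : S :\ b :\ a = S :\ a :\ b by apply/setP => x; rewrite !inE; case: (x == a); case: (x == b).
rewrite e in h2; lia.
Qed.

Lemma sderivC a b P : sderiv a (sderiv b P) = - sderiv b (sderiv a P).
Proof.
move: P; apply: (lin_ext (lin_comp (lin_sderiv _) (lin_sderiv _))
   (lin_neg (lin_comp (lin_sderiv _) (lin_sderiv _)))) => S /=.
exact: sderivC_mono.
Qed.

Definition supp (f : pred {set I}) P := forall S, P S != 0 -> f S.

Lemma wedge_nz P Q U : wedge P Q U != 0 ->
  exists S T, [/\ [disjoint S & T], S :|: T = U, P S != 0 & Q T != 0].
Proof.
move=> h.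
have : [exists S : {set I}, [exists T : {set I}, [&& [disjoint S & T], S :|: T == U, P S != 0 & Q T != 0]]].
  apply: contraNT h => /existsPn hS; rewrite wedgeE; apply/eqP.
  apply: big1 => S _; apply: big1 => T _.
  move/existsPn: (hS S) => /(_ T); rewrite /wc.
  case: [disjoint S & T]; case: (S :|: T == U) => //=; rewrite ?mulr0 //.
  by case: (P S =P 0) => [->|_]; case: (Q T =P 0) => [->|_] //=; rewrite ?mulr0 ?mul0r.
by case/existsP => S /existsP [T /and4P [d /eqP e hP hQ]]; exists S, T.
Qed.

Lemma supp_wedge (f g h : pred {set I}) P Q : supp f P -> supp g Q ->
  (forall S T, [disjoint S & T] -> f S -> g T -> h (S :|: T)) -> supp h (wedge P Q).
Proof.
move=> hP hQ hh U /wedge_nz [S [T [d <- nP nQ]]]; exact: hh d (hP _ nP) (hQ _ nQ).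
Qed.

Lemma supp_sum (f : pred {set I}) (J : Type) (r : seq J) (p : pred J) (F : J -> ext C I) :
  (forall j, p j -> supp f (F j)) -> supp f (\sum_(j <- r | p j) F j).
Proof.
move=> h U; rewrite eEsum; apply: contraNT => nf; apply/eqP; apply: big1 => j pj.
by apply/eqP; apply: contraNT nf => /(h j pj).
Qed.

Lemma supp_add (f : pred {set I}) P Q : supp f P -> supp f Q -> supp f (P + Q).
Proof.
move=> hP hQ U; rewrite eED; case: (P U =P 0) => [->|/eqP /hP //]; rewrite add0r; exact: hQ.
Qed.
Lemma supp_opp (f : pred {set I}) P : supp f P -> supp f (- P).
Proof. by move=> hP U; rewrite eEN oppr_eq0; exact: hP. Qed.
Lemma supp_scal (f : pred {set I}) c P : supp f P -> supp f (scal c P).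
Proof. by move=> hP U; rewrite eEZ mulf_eq0 negb_or => /andP[_ /hP]. Qed.
Lemma supp0 (f : pred {set I}) : supp f 0.
Proof. by move=> U; rewrite eE0 eqxx. Qed.
Lemma supp_mono (f : pred {set I}) S : f S -> supp f (m S).
Proof. move=> hS U; rewrite eEm; case: (U =P S) => [->|] //; by rewrite eqxx. Qed.
Lemma supp_if (f : pred {set I}) (b : bool) P : supp f P -> supp f (if b then P else 0).
Proof. by case: b => // _; exact: supp0. Qed.

Lemma supp_sderiv a P U : sderiv a P U != 0 -> (a \notin U) && (P (a |: U) != 0).
Proof.
rewrite sderivE /sc; case: ifP => aU; first by rewrite mul0r eqxx.
by rewrite mulf_eq0 negb_or => /andP[_ ->].
Qed.

Lemma sderiv_avoid a P : supp (fun S => a \notin S) P -> sderiv a P = 0.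
Proof.
move=> h; apply/ffunP => U; rewrite sderivE eE0.
case: (P (a |: U) =P 0) => [->|/eqP /h]; first by rewrite mulr0.
by rewrite !inE eqxx.
Qed.

Lemma wedge_comm_mono S T : ~~ odd #|S| -> wedge (m S) (m T) = wedge (m T) (m S).
Proof.
move=> hS; rewrite !wedge_mono disjoint_sym setUC; case: ifP => d //.
congr scal; rewrite !wsignE; apply: sgnP.
have := invC d; have : odd (#|S| * #|T|) = false by rewrite oddM (negbTE hS).
move: (#|S| * #|T|)%N => k; lia.
Qed.

Lemma wedge_even_comm G P : supp (fun S => ~~ odd #|S|) G -> wedge G P = wedge P G.
Proof.
move=> hG; rewrite (ext_expand G) (lin_sum (lin_wedgel _)) (lin_sum (lin_wedger _)).
apply: eq_bigr => S _; rewrite wedgeZl wedgeZr.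
case: (G S =P 0) => [->|/eqP h]; first by rewrite !scal0.
congr scal; move: P; apply: (lin_ext (lin_wedger _) (lin_wedgel _)) => T /=.
exact: wedge_comm_mono (hG _ h).
Qed.

Lemma par_even G : supp (fun S => ~~ odd #|S|) G -> par G = G.
Proof.
move=> hG; apply/ffunP => U; rewrite ffunE.
case: (G U =P 0) => [->|/eqP h]; first by rewrite mulr0.
by rewrite -signr_odd (negbTE (hG _ h)) expr0 mul1r.
Qed.

Lemma par_odd1 P : supp (fun S => odd #|S|) P -> par P = - P.
Proof.
move=> hP; apply/ffunP => U; rewrite ffunE eEN.
case: (P U =P 0) => [->|/eqP h]; first by rewrite mulr0 oppr0.
by rewrite -signr_odd (hP _ h) expr1 mulN1r.
Qed.

End Ext.

Section ModelProof.
Variables (C : numClosedFieldType) (n : nat) (E : 'M[C]_n).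
Local Notation I := ('I_n.+1 * bool)%type.
Local Notation BB := (B C n).
Local Notation irb := (irb n).
Local Notation iW := (@iW n).

Lemma supp_T (P : BB) : supp (fun _ => true) P. Proof. by []. Qed.
Lemma supp_impl (f g : pred {set I}) (P : BB) : supp f P -> (forall S, f S -> g S) -> supp g P.
Proof. by move=> h hfg S /h /hfg. Qed.

Lemma sum_if_eq (J : finType) (j : J) (F : J -> BB) :
  \sum_i (if i == j then F i else 0) = F j.
Proof. by rewrite -big_mkcond big_pred1_eq. Qed.

Definition Phi (L : BB) : BB := \sum_(j < n) wedge (LTrho E j) (sderiv (iT j) L).

Lemma schE (L X : BB) : supp (fun S => irb \notin S) L ->
  sch E L X = wedge (Phi L) (sderiv irb X).
Proof.
move=> hL; have d0 : sderiv irb L = 0 := sderiv_avoid hL.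
have step : forall a b, wedge (wedge (brL E a b) (sderiv a L)) (sderiv b X) =
   \sum_(j < n) (if a == iT j then (if b == irb then
        wedge (wedge (LTrho E j) (sderiv a L)) (sderiv b X) else 0) else 0).
  move=> a b; rewrite /brL (lin_sum (lin_wedgel _)) (lin_sum (lin_wedgel _)).
  apply: eq_bigr => j _.
  rewrite (linB (lin_wedgel _)) (linB (lin_wedgel _)).
  have -> : wedge (wedge (if (a == irb) && (b == iT j) then LTrho E j else 0)
                 (sderiv a L)) (sderiv b X) = 0.
    by case: ifP => [/andP[/eqP -> _]|_]; rewrite ?d0 ?wedge0r ?wedge0l.
  by rewrite subr0; case: (a == iT j); case: (b == irb); rewrite ?wedge0l.
rewrite /sch /schouten /Phi (lin_sum (lin_wedgel _)).
under eq_bigr => a _ do under eq_bigr => b _ do rewrite step.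
under eq_bigr => a _ do rewrite exchange_big.
rewrite exchange_big; apply: eq_bigr => j _ /=.
rewrite (eq_bigr (fun a => if a == iT j then
     wedge (wedge (LTrho E j) (sderiv a L)) (sderiv irb X) else 0)).
  by rewrite sum_if_eq.
move=> a _; case: (a == iT j); first by rewrite sum_if_eq.
by rewrite big1.
Qed.


Lemma pair_b2 (x y : 'I_n.+1) (b1 b2 : bool) : b1 != b2 -> (x, b1) != (y, b2).
Proof. by move=> h; apply/eqP => [[_ e]]; rewrite e eqxx in h. Qed.
Lemma irb_iT j : irb != iT j. Proof. exact: pair_b2. Qed.
Lemma iW_iob k : iW != iob k. Proof. exact: pair_b2. Qed.
Lemma irb_iW : irb != iW. Proof. exact: pair_b2. Qed.
Lemma iW_iT j : iW != iT j.
Proof. apply/eqP => [[e]]; by move: (ltn_ord j); rewrite -e ltnn. Qed.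
Lemma irb_iob k : irb != iob k.
Proof. apply/eqP => [[e]]; by move: (ltn_ord k); rewrite -e ltnn. Qed.

Lemma Phi_gen (L : BB) : supp (fun S => irb \notin S) L -> sch E L (gen irb) = Phi L.
Proof.
move=> hL; rewrite schE // gen_mono sderiv_mono inE eqxx setDv wsignE inv0r expr0 scal1.
exact: wedge1r.
Qed.

Lemma PhiD (L1 L2 : BB) : Phi (L1 + L2) = Phi L1 + Phi L2.
Proof.
rewrite /Phi -big_split; apply: eq_bigr => j _.
by rewrite (linD (lin_sderiv _)) (linD (lin_wedger _)).
Qed.

Lemma LTrho_supp j : supp (fun S => iW \notin S) (LTrho E j).
Proof.
apply/supp_opp/supp_sum => i _; apply/supp_scal/supp_mono.
by rewrite inE (negbTE (iW_iob i)).
Qed.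

Lemma tc_irb (L : BB) : in_tc L -> supp (fun S => irb \notin S) L.
Proof.
move=> h S /h [k ->]; rewrite !inE negb_or (irb_iT k).
by rewrite irb_iW.
Qed.
Lemma t2_irb (L : BB) : in_t2 L -> supp (fun S => irb \notin S) L.
Proof. by move=> h S /h [i [j [_ ->]]]; rewrite !inE negb_or !irb_iT. Qed.

Lemma Phi_tc (L : BB) : in_tc L -> supp (fun S => iW \in S) (Phi L).
Proof.
move=> h; apply: supp_sum => j _.
apply: (supp_wedge (f := fun _ => true) (g := fun S => iW \in S) (@supp_T _)).
  move=> U /supp_sderiv /andP [nU /h [k e]].
  have : iW \in iT j |: U by rewrite e !inE eqxx orbT.
  by rewrite !inE (negbTE (iW_iT j)).
by move=> S T _ _ hT; rewrite inE hT orbT.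
Qed.

Lemma Phi_t2 (L : BB) : in_t2 L -> supp (fun S => iW \notin S) (Phi L).
Proof.
move=> h; apply: supp_sum => j _.
apply: (supp_wedge (f := fun S => iW \notin S) (g := fun S => iW \notin S) (h := fun S => iW \notin S) (@LTrho_supp j)).
  move=> U /supp_sderiv /andP [nU /h [i [k [_ e]]]].
  apply/negP => wU.
  have : iW \in iT j |: U by rewrite !inE wU orbT.
  by rewrite e !inE (negbTE (iW_iT i)) (negbTE (iW_iT k)).
by move=> S T _ hS hT; rewrite inE negb_or hS hT.
Qed.

Definition goodG (S : {set I}) := ~~ odd #|S| && (irb \notin S) && (iW \in S).

Lemma dbarGen_supp a : supp goodG (dbarGen E a).
Proof.
apply: supp_sum => j _; apply: supp_if; apply: supp_sum => k _; apply: supp_scal.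
apply: (supp_wedge (f := fun S => S == [set iob k]) (g := fun S => S == [set iW])).
- exact: supp_mono.
- exact: supp_mono.
move=> S T _ /eqP -> /eqP ->.
rewrite /goodG cardsU1 cards1 !inE (negbTE (irb_iob k)) (negbTE irb_iW) eqxx orbT.
by rewrite eq_sym (negbTE (iW_iob k)).
Qed.

Lemma dbar_leib (P Q : BB) :
  dbar E (wedge P Q) = wedge (dbar E P) Q + wedge (par P) (dbar E Q).
Proof.
rewrite /dbar /derivation (lin_sum (lin_wedgel _)) (lin_sum (lin_wedger _)) -big_split.
apply: eq_bigr => a _ /=.
rewrite leib (linD (lin_wedger _)) wedgeA; congr (_ + _).
have hG : supp (fun S => ~~ odd #|S|) (dbarGen E a).
  by apply: (supp_impl (@dbarGen_supp a)) => S /andP[/andP[]].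
by rewrite -wedgeA (wedge_even_comm (par P) hG) wedgeA.
Qed.

Lemma dbar_sderiv (P : BB) : sderiv irb (dbar E P) = - dbar E (sderiv irb P).
Proof.
rewrite /dbar /derivation (lin_sum (lin_sderiv _)) -sumrN; apply: eq_bigr => a _.
have hG : supp (fun S => ~~ odd #|S|) (dbarGen E a).
  by apply: (supp_impl (@dbarGen_supp a)) => S /andP[/andP[]].
have hG2 : supp (fun S => irb \notin S) (dbarGen E a).
  by apply: (supp_impl (@dbarGen_supp a)) => S /andP[/andP[]].
rewrite leib (sderiv_avoid hG2) wedge0l add0r (par_even hG) sderivC.
exact: (linN (lin_wedger _)).
Qed.

Lemma dbar_supp (Y : BB) : supp (fun S => iW \in S) (dbar E Y).
Proof.
apply: supp_sum => a _.
apply: (supp_wedge (f := goodG) (g := fun _ => true) (@dbarGen_supp a) (@supp_T _)).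
by move=> S T _ /andP[_ h] _; rewrite inE h.
Qed.


Lemma card_sepU (f : pred I) (S T : {set I}) : [disjoint S & T] ->
  #|[set a in S :|: T | f a]| = (#|[set a in S | f a]| + #|[set a in T | f a]|)%N.
Proof.
move=> d.
rewrite (_ : [set a in S :|: T | f a] = [set a in S | f a] :|: [set a in T | f a]).
  rewrite cardsU (_ : _ :&: _ = set0) ?cards0 ?subn0 //.
  apply/setP => a; rewrite !inE.
  case aS: (a \in S); case aT: (a \in T) => //=; rewrite ?andbF //.
  by case: (disj_elim d aS aT).
by apply/setP => a; rewrite !inE; case: (a \in S); case: (a \in T); case: (f a).
Qed.

Lemma Bdeg_wedge p q p' q' (Y R : BB) :
  Bdeg p q Y -> Bdeg p' q' R -> Bdeg (p + p') (q + q') (wedge Y R).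
Proof.
move=> hY hR U /wedge_nz [S [T [d e nY nR]]].
have [h1 h2] := hY S nY; have [h3 h4] := hR T nR.
by rewrite -e !card_sepU // h1 h2 h3 h4.
Qed.

Lemma Bdeg_sderiv p q (x : BB) : Bdeg p q.+1 x -> Bdeg p q (sderiv irb x).
Proof.
move=> hx U /supp_sderiv /andP [nU /hx [h1 h2]]; split.
  rewrite -h1; apply: eq_card => a; rewrite !inE.
  by case: (a =P irb) => [->|] //=; rewrite (negbTE nU).
have e : [set a in irb |: U | a.2] = irb |: [set a in U | a.2].
  by apply/setP => a; rewrite !inE; case: (a =P irb) => [->|].
move: h2; rewrite e cardsU1 inE (negbTE nU) /=.
by case.
Qed.

Lemma Bdeg_noform p (x : BB) : Bdeg p 0 x -> sderiv irb x = 0.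
Proof.
move=> hx; apply: sderiv_avoid => S /hx [_ h2]; apply/negP => iS.
have : (0 < #|[set a in S | a.2]|)%N by apply/card_gt0P; exists irb; rewrite inE iS.
by rewrite h2.
Qed.

Lemma Bdeg_gen : Bdeg 0 1 (gen irb : BB).
Proof.
move=> S; rewrite gen_mono eEm; case: (S =P [set irb]) => [->|]; last by rewrite eqxx.
move=> _; split.
  apply/eqP; rewrite cards_eq0; apply/eqP/setP => a; rewrite !inE.
  by case: (a =P irb) => [->|].
rewrite (_ : [set a in [set irb] | a.2] = [set irb]) ?cards1 //.
by apply/setP => a; rewrite !inE; case: (a =P irb) => [->|].
Qed.

Lemma dbar_gen : dbar E (gen irb) = 0.
Proof.
rewrite /dbar /derivation; apply: big1 => a _.
case: (a =P irb) => [->|/eqP na].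
  by rewrite /dbarGen big1 ?wedge0l // => j _; rewrite (negbTE (irb_iT j)).
by rewrite gen_mono sderiv_mono inE (negbTE na) wedge0r.
Qed.

End ModelProof.

Theorem mainTheorem10 (C : numClosedFieldType) (n : nat) (E : 'M[C]_n)
  (Lam1 Lam2 : B C n) :
  center_is_c E ->
  in_tc Lam1 -> in_t2 Lam2 ->
  dbar E (Lam1 + Lam2) = 0 ->
  sch E (Lam1 + Lam2) (Lam1 + Lam2) = 0 ->
  E1_degenerate E (Lam1 + Lam2) <->
  (dbar_exact_in E 1 0 (sch E Lam1 (gen (@irb n)))
   /\ forall X : B C n, sch E Lam2 X = 0).
Proof.
move=> _ h1 h2 _ _.
have s1 := tc_irb h1; have s2 := t2_irb h2.
have s12 := supp_add s1 s2.
split.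
- move=> hE.
  have := hE 0%N 1%N (gen (irb n)) (@Bdeg_gen C n) (dbar_gen E).
  case=> Y [hY eY]; rewrite Phi_gen // PhiD in eY.
  have z2 : Phi E Lam2 = 0.
    apply/ffunP => U; rewrite eE0; apply/eqP.
    case wU: (@iW n \in U).
      by apply/negPn/negP => nz; move: ((Phi_t2 h2) U nz); rewrite wU.
    have d0 : dbar E Y U = 0.
      by apply/eqP/negPn/negP => nz; move: ((@dbar_supp C n E Y) U nz); rewrite wU.
    have p0 : Phi E Lam1 U = 0.
      by apply/eqP/negPn/negP => nz; move: ((Phi_tc (E:=E) h1) U nz); rewrite wU.
    by move/ffunP: eY => /(_ U); rewrite eED d0 p0 add0r => ->.
  have z1 : Phi E Lam1 = dbar E Y by rewrite -eY z2 addr0.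
  split; first by exists Y; split => //; rewrite Phi_gen // z1.
  by move=> X; rewrite schE // z2 wedge0l.
- case=> [[Y [hY eY]] hc] p q x hx dx.
  rewrite Phi_gen // in eY.
  have e : sch E (Lam1 + Lam2) x = wedge (Phi E Lam1) (sderiv (irb n) x).
    rewrite schE // PhiD (linD (lin_wedgel _)).
    by have := hc x; rewrite schE // => ->; rewrite addr0.
  case: q hx => [|q] hx /=.
    by rewrite e (Bdeg_noform hx) wedge0r.
  exists (wedge Y (sderiv (irb n) x)); split.
    exact: (Bdeg_wedge hY (Bdeg_sderiv hx)).
  have dR : dbar E (sderiv (irb n) x) = 0.
    by apply/eqP; rewrite -oppr_eq0 -dbar_sderiv dx sderiv0.
  by rewrite e dbar_leib dR wedge0r addr0 eY.
Qed.
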